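(* Let $\mathsf{P}$ be a stratified program of $\mathcal{H}$. Then its well-founded Herbrand interpretation $\mathcal{M}_\mathsf{P}$ (the Herbrand interpretation whose valuation function is the well-founded model of $\mathsf{Gr(P)}$) is extensional.
   Context: Types of $\mathcal{H}$: base types $\iota$ and $o$; predicate types $\pi::=o\mid\rho\to\pi$; argument types $\rho::=\iota\mid\pi$; every predicate type has the form $\rho_1\to\cdots\to\rho_n\to o$. Terms are built from predicate/individual variables and constants and function symbols (of types $\iota^n\to\iota$) by typed application; atoms are terms of type $o$; literals are atoms, equalities $(\mathsf{E}_1\approx\mathsf{E}_2)$ between terms of type $\iota$, and negated atoms $\sim\mathsf{E}$. A clause is $\mathsf{p}\,\mathsf{V}_1\cdots\mathsf{V}_n\leftarrow\mathsf{L}_1,\dots,\mathsf{L}_m$ with $\mathsf{p}$ a predicate constant of type $\rho_1\to\cdots\to\rho_n\to o$, $\mathsf{V}_i$ distinct variables of types $\rho_i$, $\mathsf{L}_j$ literals; a program is a finite set of clauses. Stratified: a predicate type $\pi$ is greater than $\pi'$ if $\pi=\rho_1\to\cdots\to\rho_n\to\pi'$ with $n\ge1$. $\mathsf{P}$ is stratified if the set of predicate constants appearing in $\mathsf{P}$ can be partitioned into finitely many sets $S_1,\dots,S_r$ (with $\mathit{stratum}(\mathsf{r})=i$ iff $\mathsf{r}\in S_i$) such that for every clause $\mathsf{H}\leftarrow\mathsf{A}_1,\dots,\mathsf{A}_m,\sim\mathsf{B}_1,\dots,\sim\mathsf{B}_n$ of $\mathsf{P}$ whose head has predicate constant $\mathsf{p}$: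 (1) if $\mathsf{A}_i$ is a term starting with a predicate constant $\mathsf{q}$, then $\mathit{stratum}(\mathsf{q})\le\mathit{stratum}(\mathsf{p})$; (2) if $\mathsf{A}_i$ is a term starting with a predicate variable $\mathsf{Q}$, then $\mathit{stratum}(\mathsf{q})\le\mathit{stratum}(\mathsf{p})$ for every predicate constant $\mathsf{q}$ of $\mathsf{P}$ whose type is greater than or equal to the type of $\mathsf{Q}$; (3) if $\mathsf{B}_i$ starts with a predicate constant $\mathsf{q}$, then $\mathit{stratum}(\mathsf{q})<\mathit{stratum}(\mathsf{p})$; (4) if $\mathsf{B}_i$ starts with a predicate variable $\mathsf{Q}$, then $\mathit{stratum}(\mathsf{q})<\mathit{stratum}(\mathsf{p})$ for every predicate constant $\mathsf{q}$ of $\mathsf{P}$ whose type is greater than or equal to the type of $\mathsf{Q}$. Semantics: $U_{\mathsf{P},\rho}$ is the set of ground terms of type $\rho$ built from the symbols of $\mathsf{P}$; $\mathsf{Gr(P)}$ is the set of all clauses obtained from clauses of $\mathsf{P}$ by substituting for each variable an element of $U_{\mathsf{P},\rho}$ of its type, regarded as a propositional program on the ground atoms (ground equalities being the constants true/false according to syntactic identity). $\mathcal{M}_\mathsf{P}$ is the Herbrand interpretation of $\mathsf{P}$ (symbols interpreted by themselves, application syntactic) whose valuation $v$ gives each ground atom its truth value ($\mathit{false},0,\mathit{true}$) in the well-founded model of $\mathsf{Gr(P)}$. Extensional equality: for argument type $\rho$, $\cong_{v,\rho}$ on $U_{\mathsf{P},\rho}$ is defined by: for $\rho=\iota$, syntactic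 equality; for $\rho=o$, $d\cong d'$ iff $v(d)=v(d')$; for $\rho=\rho'\to\pi$, $d\cong d'$ iff $(d\,e)\cong_{v,\pi}(d'\,e')$ for all $e,e'\in U_{\mathsf{P},\rho'}$ with $e\cong_{v,\rho'}e'$. An interpretation with valuation $v$ is extensional if $\cong_{v,\rho}$ is reflexive for every argument type $\rho$. *)

(* Defs.v *)
From Stdlib Require Import List ClassicalEpsilon.
Import ListNotations.

Inductive ty : Type := TI | TO | TArr (r p : ty).

Inductive is_pred : ty -> Prop :=
| pred_O : is_pred TO
| pred_Arr : forall r p, is_arg r -> is_pred p -> is_pred (TArr r p)
with is_arg : ty -> Prop :=
| arg_I : is_arg TI
| arg_P : forall p, is_pred p -> is_arg p.

Definition ty_ge (pi pi' : ty) : Prop :=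
  exists rs : list ty, pi = fold_right TArr pi' rs.

(* Variables and predicate constants carry their type (a symbol is a
   (name, type) pair).  Function symbols of type iota^n -> iota are
   applied to their n arguments; a function symbol is the pair
   (name, arity). *)
Inductive term : Type :=
| Var (x : nat) (t : ty)
| IConst (c : nat)
| PConst (p : nat) (t : ty)
| Fun (f : nat) (args : list term)
| App (e1 e2 : term).

Inductive wt : term -> ty -> Prop :=
| wt_Var : forall x t, is_arg t -> wt (Var x t) t
| wt_IConst : forall c, wt (IConst c) TI
| wt_PConst : forall p t, is_pred t -> wt (PConst p t) t
| wt_Fun : forall f args, (forall a, In a args -> wt a TI) -> wt (Fun f args) TI
| wt_App : forall e1 e2 r p, wt e1 (TArr r p) -> wt e2 r -> wt (App e1 e2) p.

Inductive sym : Type :=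
| SVar (x : nat) (t : ty)
| SIC (c : nat)
| SPC (p : nat) (t : ty)
| SFun (f : nat) (arity : nat).

Fixpoint syms (e : term) : list sym :=
  match e with
  | Var x t => [SVar x t]
  | IConst c => [SIC c]
  | PConst p t => [SPC p t]
  | Fun f args => SFun f (length args) :: concat (map syms args)
  | App a b => syms a ++ syms b
  end.

Definition closed (e : term) : Prop := forall x t, ~ In (SVar x t) (syms e).

Fixpoint subst (s : nat -> ty -> term) (e : term) : term :=
  match e with
  | Var x t => s x t
  | IConst c => IConst c
  | PConst p t => PConst p t
  | Fun f args => Fun f (map (subst s) args)
  | App a b => App (subst s a) (subst s b)
  end.

Fixpoint head (e : term) : term :=
  match e with
  | App a _ => head a
  | _ => e
  end.

Inductive literal : Type :=
| LPos (A : term)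
| LEq (E1 E2 : term)
| LNeg (A : term).

Definition lit_syms (l : literal) : list sym :=
  match l with
  | LPos A => syms A
  | LEq E1 E2 => syms E1 ++ syms E2
  | LNeg A => syms A
  end.

Definition wt_lit (l : literal) : Prop :=
  match l with
  | LPos A => wt A TO
  | LEq E1 E2 => wt E1 TI /\ wt E2 TI
  | LNeg A => wt A TO
  end.

(* clause  p V_1 ... V_n <- L_1, ..., L_m  *)
Record clause : Type := mkClause {
  c_head : nat;
  c_hvars : list (nat * ty);
  c_body : list literal }.

Definition c_htype (c : clause) : ty := fold_right TArr TO (map snd (c_hvars c)).

Definition c_hconst (c : clause) : term := PConst (c_head c) (c_htype c).

Definition c_hatom (c : clause) : term :=
  fold_left (fun acc v => App acc (Var (fst v) (snd v))) (c_hvars c) (c_hconst c).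

Definition clause_syms (c : clause) : list sym :=
  SPC (c_head c) (c_htype c)
    :: map (fun v => SVar (fst v) (snd v)) (c_hvars c)
    ++ concat (map lit_syms (c_body c)).

Definition wf_clause (c : clause) : Prop :=
  NoDup (c_hvars c) /\
  (forall v, In v (c_hvars c) -> is_arg (snd v)) /\
  (forall l, In l (c_body c) -> wt_lit l).

Definition program := list clause.

Definition wf_program (P : program) : Prop := forall c, In c P -> wf_clause c.

Definition prog_syms (P : program) : list sym := concat (map clause_syms P).

Definition pconst_of (P : program) (q : nat) (t : ty) : Prop := In (SPC q t) (prog_syms P).

(* A partition into finitely many strata S_1..S_r is given by a function
   stratum on the (finitely many) predicate constants of P. *)
Definition stratified (P : program) : Prop :=
  exists stratum : nat -> ty -> nat,
  forall c, In c P ->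
    let sp := stratum (c_head c) (c_htype c) in
    forall l, In l (c_body c) ->
      match l with
      | LPos A =>
          (forall q t, head A = PConst q t -> stratum q t <= sp) /\
          (forall X tX, head A = Var X tX ->
             forall q t, pconst_of P q t -> ty_ge t tX -> stratum q t <= sp)
      | LNeg B =>
          (forall q t, head B = PConst q t -> stratum q t < sp) /\
          (forall X tX, head B = Var X tX ->
             forall q t, pconst_of P q t -> ty_ge t tX -> stratum q t < sp)
      | LEq _ _ => True
      end.

Definition U (P : program) (rho : ty) (d : term) : Prop :=
  wt d rho /\ closed d /\ (forall s, In s (syms d) -> In s (prog_syms P)).

(* ground literals of a propositional program over atoms A;
   GProp Q is the truth constant "true iff Q" *)
Inductive glit (A : Type) : Type :=
| GPos (a : A)
| GNeg (a : A)
| GProp (Q : Prop).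
Arguments GPos {A}. Arguments GNeg {A}. Arguments GProp {A}.

Definition ground_lit (s : nat -> ty -> term) (l : literal) : glit term :=
  match l with
  | LPos A => GPos (subst s A)
  | LNeg A => GNeg (subst s A)
  | LEq E1 E2 => GProp (subst s E1 = subst s E2)
  end.

Definition Gr (P : program) (a : term) (body : list (glit term)) : Prop :=
  exists c (s : nat -> ty -> term),
    In c P /\
    (forall x t, In (SVar x t) (clause_syms c) -> U P t (s x t)) /\
    a = subst s (c_hatom c) /\
    body = map (ground_lit s) (c_body c).

(* (Van Gelder, Ross, Schlipf): least fixpoint of W_P(I) = T_P(I) u ~U_P(I),
   with I = (Tr, Fa) a pair of sets of atoms. *)
Section WF.
Variable A : Type.
Variable rules : A -> list (glit A) -> Prop.

Definition glit_true (Tr Fa : A -> Prop) (l : glit A) : Prop :=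
  match l with GPos b => Tr b | GNeg b => Fa b | GProp Q => Q end.

Definition glit_false (Tr Fa : A -> Prop) (l : glit A) : Prop :=
  match l with GPos b => Fa b | GNeg b => Tr b | GProp Q => ~ Q end.

Definition TP (Tr Fa : A -> Prop) (a : A) : Prop :=
  exists body, rules a body /\ forall l, In l body -> glit_true Tr Fa l.

Definition unfounded (Tr Fa S : A -> Prop) : Prop :=
  forall a, S a -> forall body, rules a body ->
    exists l, In l body /\ (glit_false Tr Fa l \/ exists b, l = GPos b /\ S b).

Definition GUS (Tr Fa : A -> Prop) (a : A) : Prop :=
  exists S, unfounded Tr Fa S /\ S a.

Definition W_prefixed (Tr Fa : A -> Prop) : Prop :=
  (forall a, TP Tr Fa a -> Tr a) /\ (forall a, GUS Tr Fa a -> Fa a).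

(* least fixpoint of the monotone operator W_P (Knaster-Tarski) *)
Definition wf_true (a : A) : Prop := forall Tr Fa, W_prefixed Tr Fa -> Tr a.
Definition wf_false (a : A) : Prop := forall Tr Fa, W_prefixed Tr Fa -> Fa a.
End WF.

Inductive tval : Type := vfalse | vundef | vtrue.

Definition wf_model {A : Type} (rules : A -> list (glit A) -> Prop) (a : A) : tval :=
  if excluded_middle_informative (wf_true A rules a) then vtrue
  else if excluded_middle_informative (wf_false A rules a) then vfalse
  else vundef.

Definition M_val (P : program) : term -> tval := wf_model (Gr P).

Fixpoint ext_eq (P : program) (v : term -> tval) (rho : ty) (d d' : term) : Prop :=
  match rho with
  | TI => d = d'
  | TO => v d = v d'
  | TArr r p => forall e e', U P r e -> U P r e' -> ext_eq P v r e e' ->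
                 ext_eq P v p (App d e) (App d' e')
  end.

Definition extensional (P : program) (v : term -> tval) : Prop :=
  forall rho, is_arg rho -> forall d, U P rho d -> ext_eq P v rho d d.

(* Main.v *)
From Stdlib Require Import List Classical ClassicalEpsilon Lia Arith PeanoNat.
Import ListNotations.
Require Import Defs.

Fixpoint term_ind2 (Q : term -> Prop)
  (HV : forall x t, Q (Var x t)) (HI : forall c, Q (IConst c))
  (HP : forall p t, Q (PConst p t))
  (HF : forall f args, Forall Q args -> Q (Fun f args))
  (HA : forall a b, Q a -> Q b -> Q (App a b)) (e : term) : Q e :=
  match e with
  | Var x t => HV x t
  | IConst c => HI c
  | PConst p t => HP p t
  | Fun f args => HF f args
      ((fix go (l : list term) : Forall Q l :=
          match l with
          | [] => Forall_nil _
          | a :: l' => Forall_cons _ (term_ind2 Q HV HI HP HF HA a) (go l')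
          end) args)
  | App a b => HA a b (term_ind2 Q HV HI HP HF HA a) (term_ind2 Q HV HI HP HF HA b)
  end.

Lemma wt_is_arg : forall e t, wt e t -> is_arg t.
Proof.
  intros e t H; induction H.
  - auto.
  - constructor.
  - apply arg_P; auto.
  - constructor.
  - inversion IHwt1; subst. inversion H1; subst. apply arg_P; auto.
Qed.

Lemma not_wt_arrTI : forall e r, ~ wt e (TArr r TI).
Proof.
  intros e r H. apply wt_is_arg in H. inversion H as [|p Hp]; subst.
  inversion Hp as [|r' p' _ Hp']; subst. inversion Hp'.
Qed.

Lemma wt_unique : forall e t1, wt e t1 -> forall t2, wt e t2 -> t1 = t2.
Proof.
  intros e t1 H; induction H; intros t2 H2; inversion H2; subst; auto.
  match goal with Hh : wt e1 (TArr _ _) |- _ => specialize (IHwt1 _ Hh) end. inversion IHwt1; auto.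
Qed.

Definition apps (h : term) (l : list term) : term := fold_left App l h.

Lemma apps_snoc : forall h l x, apps h (l ++ [x]) = App (apps h l) x.
Proof. intros. unfold apps. rewrite fold_left_app. reflexivity. Qed.

Lemma subst_apps : forall s l h, subst s (apps h l) = apps (subst s h) (map (subst s) l).
Proof. intros s l; induction l; intros h; simpl; auto. Qed.

Lemma head_apps : forall l h, head (apps h l) = head h.
Proof. induction l; intros h; [reflexivity|]. apply (IHl (App h a)). Qed.

Lemma exists_last_or_nil_tmp : forall (l : list term), l = [] \/ exists l0 x, l = l0 ++ [x].
Proof. intros l. destruct l using rev_ind; [left; auto| right; eauto]. Qed.

Lemma apps_inj : forall l l' n t n' t',
  apps (PConst n t) l = apps (PConst n' t') l' -> n = n' /\ t = t' /\ l = l'.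
Proof.
  intros l. induction l as [|x l IH] using rev_ind; intros l' n t n' t' H.
  - destruct (exists_last_or_nil_tmp l') as [->|[l0 [x0 ->]]].
    + simpl in H. inversion H; auto.
    + rewrite apps_snoc in H. simpl in H. discriminate.
  - destruct l' as [|y l''] using rev_ind.
    + rewrite apps_snoc in H. simpl in H. discriminate.
    + rewrite !apps_snoc in H. inversion H; subst.
      destruct (IH _ _ _ _ _ H1) as [? [? ?]]; subst; auto.
Qed.

Lemma U_app : forall P r p d e, U P (TArr r p) d -> U P r e -> U P p (App d e).
Proof.
  intros P r p d e [H1 [H2 H3]] [G1 [G2 G3]]. split; [|split].
  - econstructor; eauto.
  - intros x t Hin. simpl in Hin. apply in_app_or in Hin as [Hin|Hin]; [eapply H2|eapply G2]; eauto.
  - intros s Hin. simpl in Hin. apply in_app_or in Hin as [Hin|Hin]; auto.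
Qed.

Lemma U_app_inv : forall P p d e, U P p (App d e) -> exists r, U P (TArr r p) d /\ U P r e.
Proof.
  intros P p d e [H1 [H2 H3]]. inversion H1; subst. exists r. split; split; auto; split.
  - intros x t Hin. apply (H2 x t). simpl. apply in_or_app; auto.
  - intros s Hin. apply H3. simpl. apply in_or_app; auto.
  - intros x t Hin. apply (H2 x t). simpl. apply in_or_app; auto.
  - intros s Hin. apply H3. simpl. apply in_or_app; auto.
Qed.

Lemma ground_spine : forall P d tau, U P tau d -> tau <> TI ->
  exists n t xs, d = apps (PConst n t) xs /\ Forall (fun x => exists rho, U P rho x) xs.
Proof.
  intros P d. induction d; intros tau HU Hne.
  - destruct HU as [_ [Hc _]]. exfalso. apply (Hc x t). simpl; auto.
  - destruct HU as [Hw _]. inversion Hw; subst. congruence.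
  - exists p, t, []. split; auto.
  - destruct HU as [Hw _]. inversion Hw; subst. congruence.
  - apply U_app_inv in HU as [r [H1 H2]].
    destruct (IHd1 _ H1 ltac:(discriminate)) as [n [t [xs [-> Hxs]]]].
    exists n, t, (xs ++ [d2]). split.
    + rewrite apps_snoc; auto.
    + apply Forall_app; split; auto. constructor; eauto.
Qed.

Lemma head_syms : forall d q t, head d = PConst q t -> In (SPC q t) (syms d).
Proof.
  induction d; intros q t0 H; simpl in H; try discriminate.
  - inversion H; subst; simpl; auto.
  - simpl. apply in_or_app. left. auto.
Qed.

Lemma ty_ge_arr : forall t r p, ty_ge t (TArr r p) -> ty_ge t p.
Proof.
  intros t r p [rs Hrs]. exists (rs ++ [r]). rewrite fold_right_app. simpl. auto.
Qed.

Lemma ground_head : forall P d tau, U P tau d -> tau <> TI ->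
  exists q t, head d = PConst q t /\ ty_ge t tau /\ pconst_of P q t.
Proof.
  intros P d. induction d; intros tau HU Hne.
  - destruct HU as [_ [Hc _]]. exfalso. apply (Hc x t). simpl; auto.
  - destruct HU as [Hw _]. inversion Hw; subst. congruence.
  - exists p, t. destruct HU as [Hw [_ Hs]]. inversion Hw; subst.
    split; auto. split. exists []; auto. apply Hs. simpl; auto.
  - destruct HU as [Hw _]. inversion Hw; subst. congruence.
  - pose proof HU as HU'.
    apply U_app_inv in HU as [r [H1 H2]].
    destruct (IHd1 _ H1 ltac:(discriminate)) as [q [t [Hh [Hge Hp]]]].
    exists q, t. simpl. split; auto. split; auto. eapply ty_ge_arr; eauto.
Qed.

Section WFfacts.
Variable A : Type.
Variable rules : A -> list (glit A) -> Prop.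

Definition incl1 (X Y : A -> Prop) := forall a, X a -> Y a.

Lemma glit_true_mono : forall T F T' F' l, incl1 T T' -> incl1 F F' ->
  glit_true A T F l -> glit_true A T' F' l.
Proof. intros T F T' F' l H1 H2; destruct l; simpl; auto. Qed.

Lemma glit_false_mono : forall T F T' F' l, incl1 T T' -> incl1 F F' ->
  glit_false A T F l -> glit_false A T' F' l.
Proof. intros T F T' F' l H1 H2; destruct l; simpl; auto. Qed.

Lemma TP_mono : forall T F T' F', incl1 T T' -> incl1 F F' ->
  incl1 (TP A rules T F) (TP A rules T' F').
Proof.
  intros T F T' F' H1 H2 a [body [Hr Hb]]. exists body. split; auto.
  intros l Hl. eapply glit_true_mono; eauto.
Qed.

Lemma GUS_mono : forall T F T' F', incl1 T T' -> incl1 F F' ->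
  incl1 (GUS A rules T F) (GUS A rules T' F').
Proof.
  intros T F T' F' H1 H2 a [S [HS Ha]]. exists S. split; auto.
  intros b Hb body Hr. destruct (HS b Hb body Hr) as [l [Hl Hor]].
  exists l. split; auto. destruct Hor as [Hf|Hp]; auto.
  left. eapply glit_false_mono; eauto.
Qed.

Lemma lfp_prefixed : W_prefixed A rules (wf_true A rules) (wf_false A rules).
Proof.
  split.
  - intros a Ha Tr Fa Hpre. apply (proj1 Hpre).
    eapply TP_mono; [| |exact Ha]; intros b Hb; apply (Hb Tr Fa Hpre).
  - intros a Ha Tr Fa Hpre. apply (proj2 Hpre).
    eapply GUS_mono; [| |exact Ha]; intros b Hb; apply (Hb Tr Fa Hpre).
Qed.

Lemma lfp_F_GUS : forall a, wf_false A rules a ->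
  GUS A rules (wf_true A rules) (wf_false A rules) a.
Proof.
  intros a Ha. apply (Ha (TP A rules (wf_true A rules) (wf_false A rules)) (GUS A rules (wf_true A rules) (wf_false A rules))). destruct lfp_prefixed as [H1 H2]. split.
  - apply TP_mono; auto.
  - apply GUS_mono; auto.
Qed.

Lemma unfounded_GUS_F : forall S, unfounded A rules (wf_true A rules) (wf_false A rules) S ->
  forall a, S a -> wf_false A rules a.
Proof.
  intros S HS a Ha. apply (proj2 lfp_prefixed). exists S; auto.
Qed.
End WFfacts.

Lemma head_type : forall A tau, wt A tau -> tau <> TI ->
  (exists x t, head A = Var x t /\ ty_ge t tau) \/ (exists q t, head A = PConst q t /\ ty_ge t tau).
Proof.
  intros A tau H; induction H; intros Hne; try congruence.
  - left. exists x, t. split; auto. exists []; auto.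
  - right. exists p, t. split; auto. exists []; auto.
  - destruct (IHwt1 ltac:(discriminate)) as [[x [t [Hh Hg]]]|[q [t [Hh Hg]]]].
    + left. exists x, t. simpl. split; auto. eapply ty_ge_arr; eauto.
    + right. exists q, t. simpl. split; auto. eapply ty_ge_arr; eauto.
Qed.

Lemma head_var_syms : forall A x t, head A = Var x t -> In (SVar x t) (syms A).
Proof.
  induction A; intros x0 t0 H; simpl in H; try discriminate.
  - inversion H; subst; simpl; auto.
  - simpl. apply in_or_app. left. auto.
Qed.

Lemma head_subst_P : forall s A q t, head A = PConst q t -> head (subst s A) = PConst q t.
Proof. induction A; intros q0 t0 H; simpl in *; try discriminate; auto. Qed.

Lemma head_subst_V : forall s A x t, head A = Var x t -> head (subst s A) = head (s x t).
Proof. induction A; intros x0 t0 H; simpl in *; try discriminate; auto. inversion H; auto. Qed.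

Lemma ty_ge_TO_not_TI : forall t, ty_ge t TO -> t <> TI.
Proof. intros t [rs Hrs]. subst. destruct rs; simpl; discriminate. Qed.

Lemma c_hatom_apps : forall c,
  c_hatom c = apps (c_hconst c) (map (fun v => Var (fst v) (snd v)) (c_hvars c)).
Proof.
  intros c. unfold c_hatom, apps. generalize (c_hconst c).
  induction (c_hvars c); intros h; simpl; auto.
Qed.

Lemma subst_hatom : forall s c,
  subst s (c_hatom c) = apps (PConst (c_head c) (c_htype c)) (map (fun v => s (fst v) (snd v)) (c_hvars c)).
Proof.
  intros s c. rewrite c_hatom_apps, subst_apps. simpl. f_equal.
  rewrite map_map. reflexivity.
Qed.

Lemma in_syms_clause : forall c l x, In l (c_body c) -> In x (lit_syms l) -> In x (clause_syms c).
Proof.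
  intros c l x Hl Hx. unfold clause_syms. right. apply in_or_app. right.
  apply in_concat. exists (lit_syms l). split; auto. apply in_map; auto.
Qed.

Lemma in_prog_syms : forall P c x, In c P -> In x (clause_syms c) -> In x (prog_syms P).
Proof.
  intros P c x Hc Hx. unfold prog_syms. apply in_concat. exists (clause_syms c).
  split; auto. apply in_map; auto.
Qed.

Section Strat.
Variable P : program.
Variable stratum : nat -> ty -> nat.
Hypothesis Hwf : wf_program P.
Hypothesis Hst : forall c, In c P ->
    let sp := stratum (c_head c) (c_htype c) in
    forall l, In l (c_body c) ->
      match l with
      | LPos A =>
          (forall q t, head A = PConst q t -> stratum q t <= sp) /\
          (forall X tX, head A = Var X tX ->
             forall q t, pconst_of P q t -> ty_ge t tX -> stratum q t <= sp)
      | LNeg B =>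
          (forall q t, head B = PConst q t -> stratum q t < sp) /\
          (forall X tX, head B = Var X tX ->
             forall q t, pconst_of P q t -> ty_ge t tX -> stratum q t < sp)
      | LEq _ _ => True
      end.

Definition str (a : term) : nat :=
  match head a with PConst q t => stratum q t | _ => 0 end.

Lemma str_rule : forall c s, str (subst s (c_hatom c)) = stratum (c_head c) (c_htype c).
Proof.
  intros c s. unfold str. rewrite subst_hatom, head_apps. reflexivity.
Qed.



Lemma atom_str : forall c s A (Q : nat -> Prop), In c P ->
  (forall x t, In (SVar x t) (clause_syms c) -> U P t (s x t)) ->
  (forall x, In x (syms A) -> In x (clause_syms c)) ->
  wt A TO ->
  (forall q t, head A = PConst q t -> Q (stratum q t)) ->
  (forall X tX, head A = Var X tX -> forall q t, pconst_of P q t -> ty_ge t tX -> Q (stratum q t)) ->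
  Q (str (subst s A)).
Proof.
  intros c s A Q Hc HU Hsy Hw H1 H2.
  destruct (head_type A TO Hw ltac:(discriminate)) as [[x [t [Hh Hg]]]|[q [t [Hh Hg]]]].
  - unfold str. rewrite (head_subst_V s A x t Hh).
    assert (HUx : U P t (s x t)). { apply HU. apply Hsy. apply head_var_syms; auto. }
    destruct (ground_head P (s x t) t HUx (ty_ge_TO_not_TI t Hg)) as [q [t' [Hh' [Hg' Hp]]]].
    rewrite Hh'. eapply H2; eauto.
  - unfold str. rewrite (head_subst_P s A q t Hh). apply H1; auto.
Qed.

Lemma gr_strat : forall a body, Gr P a body ->
  (forall b, In (GPos b) body -> str b <= str a) /\
  (forall b, In (GNeg b) body -> str b < str a).
Proof.
  intros a body [c [s [Hc [HU [Ha Hb]]]]]. subst a body.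
  rewrite str_rule. destruct (Hwf c Hc) as [_ [_ Hwl]].
  split; intros b Hin; apply in_map_iff in Hin as [l [Hl Hlin]];
    pose proof (Hst c Hc l Hlin) as Hs; pose proof (Hwl l Hlin) as Hw;
    destruct l; simpl in Hl; inversion Hl; subst; simpl in Hw;
    destruct Hs as [Hs1 Hs2];
    (eapply (atom_str c s A); [exact Hc|exact HU| |exact Hw|exact Hs1|exact Hs2]);
    intros x Hx; eapply in_syms_clause; eauto.
Qed.
End Strat.

Section TotCons.
Variable P : program.
Variable stratum : nat -> ty -> nat.
Hypothesis Hwf : wf_program P.
Hypothesis Hst : forall c, In c P ->
    let sp := stratum (c_head c) (c_htype c) in
    forall l, In l (c_body c) ->
      match l with
      | LPos A =>
          (forall q t, head A = PConst q t -> stratum q t <= sp) /\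
          (forall X tX, head A = Var X tX ->
             forall q t, pconst_of P q t -> ty_ge t tX -> stratum q t <= sp)
      | LNeg B =>
          (forall q t, head B = PConst q t -> stratum q t < sp) /\
          (forall X tX, head B = Var X tX ->
             forall q t, pconst_of P q t -> ty_ge t tX -> stratum q t < sp)
      | LEq _ _ => True
      end.

Notation T := (wf_true term (Gr P)).
Notation F := (wf_false term (Gr P)).
Notation strP := (str stratum).

Lemma totality : forall k a, strP a <= k -> T a \/ F a.
Proof.
  intros k. induction k as [k IH] using lt_wf_ind. intros a Ha.
  destruct (classic (T a)) as [HT|HT]; [left; auto|right].
  apply (unfounded_GUS_F term (Gr P) (fun b => strP b <= k /\ ~ T b)); [|split; auto].
  intros b [Hbk HbT] body Hr. apply NNPP. intros Hno. apply HbT.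
  apply (proj1 (lfp_prefixed term (Gr P))). exists body. split; auto.
  destruct (gr_strat P stratum Hwf Hst b body Hr) as [Hp Hn].
  intros l Hl. destruct l as [c|c|Q]; simpl.
  - apply NNPP. intros Hc. apply Hno. exists (GPos c). split; auto. right. exists c. split; auto.
    split; [specialize (Hp c Hl); lia | exact Hc].
  - specialize (Hn c Hl).
    destruct (IH (strP c) ltac:(lia) c (le_n _)) as [Hc|Hc]; auto.
    exfalso. apply Hno. exists (GNeg c). split; [exact Hl|left; exact Hc].
  - apply NNPP. intros Hq. apply Hno. exists (GProp Q). split; [exact Hl|left; exact Hq].
Qed.

Lemma consistency : forall k a, strP a <= k -> ~ (T a /\ F a).
Proof.
  intros k. induction k as [k IH] using lt_wf_ind. intros a Ha [HT HF].
  set (T' := fun b => T b /\ (strP b <= k -> ~ F b)).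
  assert (Hpre : W_prefixed term (Gr P) T' F).
  { split.
    - intros b Hb. split.
      + apply (proj1 (lfp_prefixed term (Gr P))).
        eapply TP_mono; [| |exact Hb]; intros x Hx; [apply Hx|exact Hx].
      + intros Hbk HFb. destruct Hb as [body [Hr Hbody]].
        destruct (lfp_F_GUS term (Gr P) b HFb) as [S [HS HSb]].
        destruct (HS b HSb body Hr) as [l [Hl Hor]].
        destruct (gr_strat P stratum Hwf Hst b body Hr) as [Hp Hn].
        specialize (Hbody l Hl).
        destruct l as [c|c|Q]; simpl in *.
        * destruct Hbody as [HTc HFc]. specialize (Hp c Hl).
          apply HFc; [lia|]. destruct Hor as [Hf|[c' [Heq HSc]]]; auto.
          inversion Heq; subst. eapply unfounded_GUS_F; eauto.
        * specialize (Hn c Hl). destruct Hor as [Hf|[c' [Heq _]]]; [|discriminate].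
          apply (IH (strP c) ltac:(lia) c (le_n _)). auto.
        * destruct Hor as [Hf|[c' [Heq _]]]; [|discriminate]. auto.
    - intros b Hb. apply (proj2 (lfp_prefixed term (Gr P))).
      eapply GUS_mono; [| |exact Hb]; intros x Hx; [apply Hx|exact Hx]. }
  destruct (HT T' F Hpre) as [_ H]. apply H; auto.
Qed.
End TotCons.

Fixpoint args_of (t : ty) : list ty :=
  match t with TArr r p => r :: args_of p | _ => [] end.

Definition RA (P : program) (v : term -> tval) (pi : ty) : Prop :=
  forall r, In r (args_of pi) -> forall x, U P r x -> ext_eq P v r x x.

Inductive relT (P : program) (v : term -> tval) : ty -> term -> term -> Prop :=
| rb : forall pi d d', U P pi d -> U P pi d' -> ext_eq P v pi d d' -> RA P v pi -> relT P v pi d d'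
| rr : forall tau d, U P tau d -> relT P v tau d d
| ra : forall r p d1 d1' d2 d2', relT P v (TArr r p) d1 d1' -> relT P v r d2 d2' ->
       relT P v p (App d1 d2) (App d1' d2').

Inductive args_rel (R : ty -> term -> term -> Prop) : ty -> ty -> list term -> list term -> Prop :=
| ar_nil : forall tau, args_rel R tau tau [] []
| ar_cons : forall r p tau u u' us us', R r u u' -> args_rel R p tau us us' ->
    args_rel R (TArr r p) tau (u :: us) (u' :: us').

Lemma relT_U : forall P v tau d d', relT P v tau d d' -> U P tau d /\ U P tau d'.
Proof.
  intros P v tau d d' H; induction H; auto.
  destruct IHrelT1, IHrelT2. split; eapply U_app; eauto.
Qed.

Lemma relT_TI : forall P v d d', relT P v TI d d' -> d = d'.
Proof.
  intros P v d d' H. remember TI as t. induction H; subst; auto.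
  exfalso. apply relT_U in H as [[Hw _] _]. eapply not_wt_arrTI; eauto.
Qed.

Lemma ext_eq_sym : forall P v tau d d', ext_eq P v tau d d' -> ext_eq P v tau d' d.
Proof.
  intros P v tau. induction tau; intros d d' H; simpl in *; auto.
Qed.

Lemma relT_sym : forall P v tau d d', relT P v tau d d' -> relT P v tau d' d.
Proof.
  intros P v tau d d' H; induction H.
  - apply rb; auto. apply ext_eq_sym; auto.
  - apply rr; auto.
  - eapply ra; eauto.
Qed.

Lemma args_rel_snoc : forall R pi r p us us' u u', args_rel R pi (TArr r p) us us' ->
  R r u u' -> args_rel R pi p (us ++ [u]) (us' ++ [u']).
Proof.
  intros R pi r p us us' u u' H. remember (TArr r p) as tt. induction H; intros Hu; subst; simpl.
  - econstructor; eauto. constructor.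
  - econstructor; eauto.
Qed.

Lemma args_rel_mono : forall R pi tau us us', args_rel R pi tau us us' ->
  forall R', (forall r u u', In r (args_of pi) -> R r u u' -> R' r u u') -> args_rel R' pi tau us us'.
Proof.
  intros R pi tau us us' H; induction H; intros R' HR; constructor.
  - apply HR; simpl; auto.
  - apply IHargs_rel. intros; apply HR; simpl; auto.
Qed.


Lemma relT_apps : forall P v pi tau us us', args_rel (relT P v) pi tau us us' ->
  forall b b', relT P v pi b b' -> relT P v tau (apps b us) (apps b' us').
Proof.
  intros P v pi tau us us' H; induction H; intros b b' Hb; simpl; auto.
  apply IHargs_rel. eapply ra; eauto.
Qed.

Lemma ext_apps : forall P v pi tau us us',
  args_rel (fun r u u' => U P r u /\ U P r u' /\ ext_eq P v r u u') pi tau us us' ->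
  forall b b', U P pi b -> U P pi b' -> ext_eq P v pi b b' -> ext_eq P v tau (apps b us) (apps b' us').
Proof.
  intros P v pi tau us us' H; induction H; intros b b' Hb Hb' Hbb; simpl; auto.
  destruct H as [Hu [Hu' He]].
  apply IHargs_rel; try (eapply U_app; eauto). simpl in Hbb. apply Hbb; auto.
Qed.

Lemma Forall_Forall2_diag : forall (A : Type) (Q : A -> Prop) (R : A -> A -> Prop) l,
  (forall x, Q x -> R x x) -> Forall Q l -> Forall2 R l l.
Proof. intros A Q R l H Hl; induction Hl; constructor; auto. Qed.

Lemma SR : forall P v tau d d', relT P v tau d d' -> tau <> TI ->
  (exists n t xs xs', d = apps (PConst n t) xs /\ d' = apps (PConst n t) xs' /\
      Forall2 (fun x y => exists rho, relT P v rho x y) xs xs') \/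
  (exists pi b b' us us', U P pi b /\ U P pi b' /\ ext_eq P v pi b b' /\ RA P v pi /\
      d = apps b us /\ d' = apps b' us' /\ args_rel (relT P v) pi tau us us').
Proof.
  intros P v tau d d' H; induction H; intros Hne.
  - right. exists pi, d, d', [], []. refine (conj H (conj H0 (conj H1 (conj H2 (conj eq_refl (conj eq_refl _)))))). constructor.
  - left. destruct (ground_spine P d tau H Hne) as [n [t [xs [-> Hxs]]]].
    exists n, t, xs, xs. split; [reflexivity|split; [reflexivity|]].
    eapply Forall_Forall2_diag; [|exact Hxs]. intros x [rho Hx]. exists rho. apply rr; auto.
  - destruct (IHrelT1 ltac:(discriminate)) as
      [[n [t [xs [xs' [-> [-> Hf]]]]]]|[pi [b [b' [us [us' [Hb [Hb' [He [HRA [-> [-> Ha]]]]]]]]]]]].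
    + left. exists n, t, (xs ++ [d2]), (xs' ++ [d2']). rewrite !apps_snoc. split; [reflexivity|split; [reflexivity|]].
      apply Forall2_app; auto. constructor; eauto.
    + right. exists pi, b, b', (us ++ [d2]), (us' ++ [d2']). rewrite !apps_snoc.
      refine (conj Hb (conj Hb' (conj He (conj HRA (conj eq_refl (conj eq_refl _)))))). eapply args_rel_snoc; eauto.
Qed.

Lemma subst_rel : forall P v s s' t tau, wt t tau ->
  (forall x, In x (syms t) -> In x (prog_syms P)) ->
  (forall x ty, In (SVar x ty) (syms t) -> relT P v ty (s x ty) (s' x ty)) ->
  relT P v tau (subst s t) (subst s' t).
Proof.
  intros P v s s' t. induction t using term_ind2; intros tau Hw Hsy Hv; simpl.
  - inversion Hw; subst. apply Hv. simpl; auto.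
  - inversion Hw; subst. apply rr. split; [constructor|split].
    + intros x t Hin. simpl in Hin. destruct Hin as [Hin|[]]; discriminate.
    + intros x Hin. apply Hsy. auto.
  - inversion Hw; subst. apply rr. split; [constructor; auto|split].
    + intros x t0 Hin. simpl in Hin. destruct Hin as [Hin|[]]; discriminate.
    + intros x Hin. apply Hsy. auto.
  - inversion Hw; subst.
    assert (Hargs : forall a, In a args -> relT P v TI (subst s a) (subst s' a)).
    { intros a Ha. rewrite Forall_forall in H. apply H; auto.
      - intros x Hx. apply Hsy. simpl. right. apply in_concat. exists (syms a). split; auto. apply in_map; auto.
      - intros x ty Hx. apply Hv. simpl. right. apply in_concat. exists (syms a). split; auto. apply in_map; auto. }
    assert (Heq : map (subst s) args = map (subst s') args).
    { apply map_ext_in. intros a Ha. apply relT_TI with P v. auto. }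
    rewrite <- Heq. apply rr. split; [|split].
    + constructor. intros a Ha. apply in_map_iff in Ha as [a0 [<- Ha0]].
      apply (proj1 (relT_U _ _ _ _ _ (Hargs a0 Ha0))).
    + intros x t Hin. simpl in Hin. destruct Hin as [Hin|Hin]; [discriminate|].
      apply in_concat in Hin as [l [Hl Hin]]. apply in_map_iff in Hl as [a [<- Ha]].
      apply in_map_iff in Ha as [a0 [<- Ha0]].
      destruct (proj1 (relT_U _ _ _ _ _ (Hargs a0 Ha0))) as [_ [Hc _]]. eapply Hc; eauto.
    + intros x Hin. simpl in Hin. destruct Hin as [<-|Hin].
      * rewrite length_map. apply Hsy. simpl. auto.
      * apply in_concat in Hin as [l [Hl Hin]]. apply in_map_iff in Hl as [a [<- Ha]].
        apply in_map_iff in Ha as [a0 [<- Ha0]].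
        destruct (proj1 (relT_U _ _ _ _ _ (Hargs a0 Ha0))) as [_ [_ Hs]]. eauto.
  - inversion Hw; subst. eapply ra.
    + apply IHt1; [eassumption| intros x Hx; apply Hsy; simpl; apply in_or_app; auto | intros x ty Hx; apply Hv; simpl; apply in_or_app; auto].
    + apply IHt2; [eassumption| intros x Hx; apply Hsy; simpl; apply in_or_app; auto | intros x ty Hx; apply Hv; simpl; apply in_or_app; auto].
Qed.

Definition ty_eq_dec : forall x y : ty, {x = y} + {x <> y}.
Proof. decide equality. Defined.

Definition pdec : forall x y : nat * ty, {x = y} + {x <> y}.
Proof. decide equality; [apply ty_eq_dec|apply Nat.eq_dec]. Defined.

Fixpoint lookup (hv : list (nat * ty)) (xs : list term) (x : nat) (t : ty) : option term :=
  match hv, xs with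
  | v :: hv', y :: xs' => if pdec v (x, t) then Some y else lookup hv' xs' x t
  | _, _ => None
  end.

Lemma lookup_map : forall hv xs, NoDup hv -> length xs = length hv ->
  map (fun v => lookup hv xs (fst v) (snd v)) hv = map Some xs.
Proof.
  induction hv as [|v hv IH]; intros xs Hnd Hl; destruct xs as [|y xs]; simpl in *; try discriminate; auto.
  inversion Hnd; subst. destruct (pdec v (fst v, snd v)) as [_|Hn]; [|destruct v; simpl in Hn; congruence].
  f_equal. rewrite <- IH; auto. apply map_ext_in. intros w Hw.
  destruct (pdec v (fst w, snd w)) as [Heq|]; auto.
  exfalso. destruct w; simpl in Heq; subst. auto.
Qed.

Lemma lookup_rel : forall (R : term -> term -> Prop) sv hv xs x t y,
  Forall2 R (map sv hv) xs -> lookup hv xs x t = Some y -> R (sv (x, t)) y.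
Proof.
  intros R sv hv. induction hv as [|v hv IH]; intros xs x t y Hf Hl; simpl in *.
  - discriminate.
  - inversion Hf; subst. destruct (pdec v (x, t)) as [->|]; [inversion Hl; subst; auto|].
    eapply IH; eauto.
Qed.

Section Main.
Variable P : program.
Variable stratum : nat -> ty -> nat.
Hypothesis Hwf : wf_program P.
Hypothesis Hst : forall c, In c P ->
    let sp := stratum (c_head c) (c_htype c) in
    forall l, In l (c_body c) ->
      match l with
      | LPos A =>
          (forall q t, head A = PConst q t -> stratum q t <= sp) /\
          (forall X tX, head A = Var X tX ->
             forall q t, pconst_of P q t -> ty_ge t tX -> stratum q t <= sp)
      | LNeg B =>
          (forall q t, head B = PConst q t -> stratum q t < sp) /\
          (forall X tX, head B = Var X tX ->
             forall q t, pconst_of P q t -> ty_ge t tX -> stratum q t < sp)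
      | LEq _ _ => True
      end.

Notation T := (wf_true term (Gr P)).
Notation F := (wf_false term (Gr P)).
Notation strP := (str stratum).
Notation v := (M_val P).
Notation rel := (fun x y => exists rho, relT P v rho x y).

Lemma str_apps : forall n t xs xs', strP (apps (PConst n t) xs) = strP (apps (PConst n t) xs').
Proof. intros. unfold str. rewrite !head_apps. reflexivity. Qed.

Lemma map_opt : forall (A B : Type) (f : A -> option B) (g : A -> B) l ys,
  map f l = map Some ys -> map (fun w => match f w with Some y => y | None => g w end) l = ys.
Proof.
  intros A B f g l. induction l as [|a l IH]; intros ys H; destruct ys; simpl in *; try discriminate; auto.
  inversion H as [[H1 H2]]. rewrite H1. f_equal. auto.
Qed.

Lemma transfer : forall (T1 F1 Tt Ft : term -> Prop) a body n t xs xs',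
  Gr P a body -> (forall l, In l body -> glit_true term T1 F1 l) ->
  a = apps (PConst n t) xs -> Forall2 rel xs xs' ->
  (forall b b', In (GPos b) body -> relT P v TO b b' -> strP b' <= strP a -> T1 b -> Tt b') ->
  (forall b b', In (GNeg b) body -> relT P v TO b b' -> strP b' < strP a -> F1 b -> Ft b') ->
  exists body', Gr P (apps (PConst n t) xs') body' /\ forall l, In l body' -> glit_true term Tt Ft l.
Proof.
  intros T1 F1 Tt Ft a body n t xs xs' Hgr Htrue Ha Hf Hpos Hneg.
  destruct Hgr as [cl [s [Hc [HU [Ha' Hb]]]]].
  assert (Hstra : strP a = strP (apps (PConst n t) xs')) by (rewrite Ha; apply str_apps).
  rewrite subst_hatom in Ha'. rewrite Ha in Ha'.
  apply apps_inj in Ha' as [-> [-> ->]].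
  set (hv := c_hvars cl) in *.
  set (s' := fun x t0 => match lookup hv xs' x t0 with Some y => y | None => s x t0 end).
  destruct (Hwf cl Hc) as [Hnd [_ Hwl]].
  assert (Hrel : forall x ty, In (SVar x ty) (clause_syms cl) -> relT P v ty (s x ty) (s' x ty)).
  { intros x ty Hin. unfold s'. destruct (lookup hv xs' x ty) as [y|] eqn:Hl.
    - pose proof (lookup_rel rel (fun v0 => s (fst v0) (snd v0)) hv xs' x ty y Hf Hl) as [rho Hr].
      simpl in Hr. pose proof (proj1 (relT_U _ _ _ _ _ Hr)) as [Hw1 _].
      destruct (HU x ty Hin) as [Hw2 _]. rewrite (wt_unique _ _ Hw1 _ Hw2) in Hr. exact Hr.
    - apply rr. auto. }
  assert (Hlen : length xs' = length hv).
  { apply Forall2_length in Hf. rewrite length_map in Hf. auto. }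
  assert (Hmap : map (fun v0 => s' (fst v0) (snd v0)) hv = xs').
  { unfold s'. apply (map_opt _ _ (fun v0 => lookup hv xs' (fst v0) (snd v0))).
    apply lookup_map; auto. }
  assert (Hgr' : Gr P (apps (PConst (c_head cl) (c_htype cl)) xs') (map (ground_lit s') (c_body cl))).
  { exists cl, s'. split; [auto|split; [|split; [|reflexivity]]].
    - intros x ty Hin. exact (proj2 (relT_U _ _ _ _ _ (Hrel x ty Hin))).
    - rewrite subst_hatom. fold hv. rewrite Hmap. reflexivity. }
  exists (map (ground_lit s') (c_body cl)). split; auto.
  destruct (gr_strat P stratum Hwf Hst _ _ Hgr') as [Hsp Hsn].
  intros l' Hl'. pose proof Hl' as Hl'0. apply in_map_iff in Hl' as [l [<- Hl]].
  assert (Hlt : glit_true term T1 F1 (ground_lit s l)).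
  { apply Htrue. rewrite Hb. apply in_map; auto. }
  assert (Hinb : In (ground_lit s l) body) by (rewrite Hb; apply in_map; auto).
  assert (HR : forall A tau, wt A tau -> (forall x, In x (syms A) -> In x (lit_syms l)) ->
            relT P v tau (subst s A) (subst s' A)).
  { intros A tau Hw Hsub. apply subst_rel; auto.
    - intros x Hx. eapply in_prog_syms; eauto. eapply in_syms_clause; eauto.
    - intros x ty Hx. apply Hrel. eapply in_syms_clause; eauto. }
  pose proof (Hwl l Hl) as Hw.
  destruct l as [A|E1 E2|A]; simpl in *.
  - eapply Hpos; eauto. rewrite Hstra. apply Hsp. auto.
  - destruct Hw as [Hw1 Hw2].
    rewrite <- (relT_TI _ _ _ _ (HR E1 TI Hw1 ltac:(intros; apply in_or_app; auto))).
    rewrite <- (relT_TI _ _ _ _ (HR E2 TI Hw2 ltac:(intros; apply in_or_app; auto))). auto.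
  - eapply Hneg; eauto. rewrite Hstra. apply Hsn. auto.
Qed.

Lemma Mv_true : forall a, v a = vtrue <-> T a.
Proof.
  intros a. unfold M_val, wf_model.
  destruct (excluded_middle_informative (wf_true term (Gr P) a)); [split; auto|].
  destruct (excluded_middle_informative (wf_false term (Gr P) a)); split; intros H; try discriminate; tauto.
Qed.

Lemma apps_app : forall h l1 l2, apps h (l1 ++ l2) = apps (apps h l1) l2.
Proof. intros. unfold apps. apply fold_left_app. Qed.

Lemma args_rel_TI : forall R tau us us', args_rel R TI tau us us' -> tau = TI /\ us = [].
Proof. intros R tau us us' H. inversion H; auto. Qed.

Lemma args_rel_Forall2 : forall pi tau us us', args_rel (relT P v) pi tau us us' -> Forall2 rel us us'.
Proof. intros pi tau us us' H; induction H; constructor; eauto. Qed.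

Lemma args_rel_right : forall R pi tau us us', args_rel R pi tau us us' ->
  forall R', (forall r u u', In r (args_of pi) -> R r u u' -> R' r u' u') -> args_rel R' pi tau us' us'.
Proof.
  intros R pi tau us us' H; induction H; intros R' HR; constructor.
  - eapply HR; simpl; eauto.
  - apply IHargs_rel. intros; eapply HR; simpl; eauto.
Qed.

Definition Tclaim (k : nat) : Prop :=
  forall a a', relT P v TO a a' -> strP a <= k -> T a -> T a'.

Lemma Fclaim : forall j, Tclaim j -> forall a a', relT P v TO a a' -> strP a <= j -> strP a' <= j -> F a -> F a'.
Proof.
  intros j HT a a' Hr Ha Ha' HF.
  destruct (totality P stratum Hwf Hst j a' Ha') as [HTa'|]; auto.
  exfalso. apply (consistency P stratum Hwf Hst j a Ha). split; auto.
  eapply HT; eauto. apply relT_sym; auto.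
Qed.

Lemma tclaim_all : forall k, Tclaim k.
Proof.
  intros k. induction k as [k IH] using lt_wf_ind.
  intros a a' Hr Hak HTa.
  set (T' := fun b => T b /\ (strP b <= k -> forall b', relT P v TO b b' -> T b')).
  assert (Hpre : W_prefixed term (Gr P) T' F).
  { split.
    - intros b Hb. split.
      + apply (proj1 (lfp_prefixed term (Gr P))).
        eapply TP_mono; [| |exact Hb]; intros x Hx; solve [exact (proj1 Hx) | exact Hx].
      + intros Hbk b' Hbb. destruct Hb as [body [Hgr Hbody]].
        destruct (gr_strat P stratum Hwf Hst _ _ Hgr) as [Hsp Hsn].
        assert (caseB : forall n t xs xs', b = apps (PConst n t) xs -> Forall2 rel xs xs' ->
                   T (apps (PConst n t) xs')).
        { intros n t xs xs' Hb Hf.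
          destruct (transfer T' F T F b body n t xs xs' Hgr Hbody Hb Hf) as [body' [Hgr' Hb']].
          - intros c c' Hin Hcc Hc' [_ HT'c]. apply HT'c; auto. specialize (Hsp c Hin). lia.
          - intros c c' Hin Hcc Hc' HFc. specialize (Hsn c Hin).
            apply (Fclaim (pred (strP b)) (IH (pred (strP b)) ltac:(lia)) c c'); auto; lia.
          - apply (proj1 (lfp_prefixed term (Gr P))). exists body'. auto. }
        destruct (SR P v TO b b' Hbb ltac:(discriminate)) as
          [[n [t [xs [xs' [Hb1 [-> Hf]]]]]]|[pi [b0 [b0' [us [us' [Hb0 [Hb0' [He [HRA [Hb1 [-> Ha]]]]]]]]]]]].
        * eapply caseB; eauto.
        * assert (Hpi : pi <> TI). { intros ->. apply args_rel_TI in Ha as [? _]. discriminate. }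
          destruct (ground_spine P b0 pi Hb0 Hpi) as [n [t [ws [Hws Hwsf]]]].
          assert (HT1 : T (apps b0 us')).
          { rewrite Hws, <- apps_app. apply (caseB n t (ws ++ us)).
            - rewrite Hb1, Hws, apps_app. reflexivity.
            - apply Forall2_app.
              + eapply Forall_Forall2_diag; [|exact Hwsf]. intros x [rho Hx]. exists rho. apply rr; auto.
              + eapply args_rel_Forall2; eauto. }
          assert (Hext : ext_eq P v TO (apps b0 us') (apps b0' us')).
          { apply ext_apps with pi; auto.
            eapply args_rel_right; [exact Ha|]. intros r u u' Hin Huu.
            pose proof (proj2 (relT_U _ _ _ _ _ Huu)) as HU'. split; [|split]; auto. }
          simpl in Hext. apply Mv_true. rewrite <- Hext. apply Mv_true. auto.
    - intros b Hb. apply (proj2 (lfp_prefixed term (Gr P))).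
      eapply GUS_mono; [| |exact Hb]; intros x Hx; solve [exact (proj1 Hx) | exact Hx]. }
  destruct (HTa T' F Hpre) as [_ H]. apply H; auto.
Qed.
End Main.

Fixpoint tsize (t : ty) : nat := match t with TArr r p => S (tsize r + tsize p) | _ => 1 end.

Lemma args_of_size : forall r s, In s (args_of r) -> tsize s < tsize r.
Proof.
  induction r; intros s Hin; simpl in Hin; try contradiction.
  destruct Hin as [<-|Hin]; simpl; [lia|]. specialize (IHr2 s Hin). lia.
Qed.

Theorem theorem2 (P : program) :
  wf_program P -> stratified P -> extensional P (M_val P).
Proof.
  intros Hwf [stratum Hst].
  assert (Ho : forall a a', relT P (M_val P) TO a a' -> M_val P a = M_val P a').
  { intros a a' Hr.
    set (k := Nat.max (str stratum a) (str stratum a')).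
    pose proof (tclaim_all P stratum Hwf Hst k) as HT.
    assert (HTT : wf_true term (Gr P) a <-> wf_true term (Gr P) a').
    { split; intros H; eapply HT; eauto; try apply relT_sym; auto; unfold k; lia. }
    assert (HFF : wf_false term (Gr P) a <-> wf_false term (Gr P) a').
    { split; intros H; eapply (Fclaim P stratum Hwf Hst k HT); eauto; try apply relT_sym; auto; unfold k; lia. }
    unfold M_val, wf_model.
    destruct (excluded_middle_informative (wf_true term (Gr P) a));
    destruct (excluded_middle_informative (wf_true term (Gr P) a')); try tauto;
    destruct (excluded_middle_informative (wf_false term (Gr P) a));
    destruct (excluded_middle_informative (wf_false term (Gr P) a')); tauto. }
  assert (Hfund : forall n rho, tsize rho < n -> forall d d', relT P (M_val P) rho d d' ->
                    ext_eq P (M_val P) rho d d').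
  { intros n. induction n as [|n IH]; intros rho Hs d d' Hr; [lia|].
    destruct rho as [| |r p].
    - simpl. apply relT_TI with P (M_val P); auto.
    - simpl. apply Ho; auto.
    - simpl in *. intros e e' He He' Hee. apply IH; [lia|]. eapply ra; eauto.
      apply rb; auto. intros s Hin x Hx. apply IH.
      + pose proof (args_of_size r s Hin). lia.
      + apply rr; auto. }
  intros rho _ d Hd. apply (Hfund (S (tsize rho))); [lia|]. apply rr; auto.
Qed.
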